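(* Let $0<\alpha<1$ and let $n$ be sufficiently large in terms of $\alpha$. Let $G$ be a graph on $n$ vertices with $e(G)\geq n^{1+\alpha}$. Then $G$ contains a subgraph $G''$ on $m\geq n^{\alpha\frac{1-\alpha}{1+\alpha}}$ vertices such that $e(G'')\geq \frac13 m^{1+\alpha}$ and $\Delta(G'')\leq Km^{\alpha}$, where $K=10\cdot 2^{1/\alpha^2+1}$.
   Context: $e(G)$ is the number of edges and $\Delta(G)$ the maximum degree of $G$. *)

(* Defs.v *)
From mathcomp Require Import all_boot.
From Stdlib Require Import Reals.
Set Implicit Arguments. Unset Strict Implicit. Unset Printing Implicit Defensive.

Definition simple_graph (T : finType) (e : rel T) : Prop :=
  symmetric e /\ irreflexive e.

Definition nedges (T : finType) (e : rel T) : nat :=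
  #|[set A : {set T} | [exists x, exists y,
       [&& x != y, e x y & A == [set x; y]]]]|.

Definition deg (T : finType) (f : rel T) (x : T) : nat := #|[set y | f x y]|.

Definition maxdeg (T : finType) (S : {set T}) (f : rel T) : nat :=
  \max_(x in S) deg f x.

Definition subgraph (T : finType) (e : rel T) (S : {set T}) (f : rel T) : Prop :=
  symmetric f /\ (forall x y, f x y -> [&& e x y, x \in S & y \in S]).

(* Main.v *)
Require Import Defs.
From mathcomp Require Import all_boot.
From Stdlib Require Import Reals.
From Stdlib Require Import Lra Classical.
From mathcomp Require Import zify.
Set Implicit Arguments. Unset Strict Implicit. Unset Printing Implicit Defensive.

Definition dgr (T : finType) (F : {set {set T}}) (v : T) : nat :=
  #|[set A in F | v \in A]|.

Lemma sum_cond_card (I : finType) (B : {set I}) (c : pred I) :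
  \sum_(A in B) (c A : nat) = #|[set A in B | c A]|.
Proof.
rewrite -sum1_card; apply/esym; rewrite big_mkcond /= [RHS]big_mkcond /=.
apply: eq_bigr => A _; rewrite inE; by case: (A \in B); case: (c A).
Qed.

Lemma card_meet (T : finType) (A W : {set T}) :
  #|A :&: W| = \sum_(v in W) (v \in A : nat).
Proof. rewrite sum_cond_card; apply: eq_card => v; by rewrite !inE andbC. Qed.

Lemma sum_dgr (T : finType) (F : {set {set T}}) (W : {set T}) :
  \sum_(v in W) dgr F v = \sum_(A in F) #|A :&: W|.
Proof.
rewrite /dgr.
transitivity (\sum_(v in W) \sum_(A in F) (v \in A : nat)).
  apply: eq_bigr => v _; by rewrite sum_cond_card.
rewrite exchange_big /=; apply: eq_bigr => A _; by rewrite card_meet.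
Qed.

Lemma averaging (T : finType) (L : {set T}) (w : T -> nat) t :
  t <= #|L| -> exists Z : {set T}, Z \subset L /\ #|Z| = t /\
    t * \sum_(v in L) w v <= #|L| * \sum_(v in Z) w v.
Proof.
move=> htL; have [k hk] : exists k, t + k = #|L| by exists (subn #|L| t); rewrite subnKC.
elim: k t htL hk => [|k IH] t htL hk.
  exists L; split => //; split; first lia; by rewrite addn0 in hk; rewrite hk.
have [Z [ZL [cZ hZ]]] : exists Z : {set T}, Z \subset L /\ #|Z| = t.+1 /\ t.+1 * \sum_(v in L) w v <= #|L| * \sum_(v in Z) w v by apply: IH; lia.
have Zn : 0 < #|Z| by lia.
have [z0 z0Z] : exists z, z \in Z by apply/set0Pn; rewrite -card_gt0.
case: (arg_minnP w z0Z) => z zZ zmin.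
exists (Z :\ z); split; first by apply: subset_trans ZL; apply: subD1set.
have zZ' : z \in Z by exact: zZ.
have cZ' : #|Z :\ z| = t by have := cardsD1 z Z; rewrite zZ'; lia.
split => //.
have sZ : \sum_(v in Z) w v = w z + \sum_(v in Z :\ z) w v.
  by rewrite (big_setD1 z zZ').
have mZ : #|Z| * w z <= \sum_(v in Z) w v.
  rewrite -sum_nat_const; apply: leq_sum => i iZ; exact: zmin.
rewrite cZ in mZ.
set SL := \sum_(v in L) w v in hZ *; set SZ := \sum_(v in Z :\ z) w v in sZ *.
rewrite sZ in hZ mZ.
have : t.+1 * (t * SL) <= t.+1 * (#|L| * SZ) by nia.
by rewrite leq_pmul2l.
Qed.

Lemma exists_max (I : finType) (P : I -> Prop) (F : I -> R) x0 :
  P x0 -> exists x, P x /\ forall y, P y -> (F y <= F x)%R.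
Proof.
move=> Px0.
suff H : forall s : seq I, exists x, P x /\ forall y, y \in s -> P y -> (F y <= F x)%R.
  have [x [Px Hx]] := H (enum I); exists x; split => // y Py; apply: Hx => //; by rewrite mem_enum.
elim => [|a s [x [Px Hx]]]; first by exists x0.
case: (classic (P a /\ (F x < F a)%R)) => [[Pa lt]|nlt].
  exists a; split => // y; rewrite inE => /orP [/eqP -> _|ys Py]; first lra.
  have := Hx y ys Py; lra.
exists x; split => // y; rewrite inE => /orP [/eqP -> Py|ys Py]; last exact: Hx.
apply: Rnot_lt_le => lt; apply: nlt; split => //.
Qed.

Lemma INR_addn m n : INR (m + n)%N = (INR m + INR n)%R.
Proof. exact: plus_INR. Qed.
Lemma INR_muln m n : INR (m * n)%N = (INR m * INR n)%R.
Proof. exact: mult_INR. Qed.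

Lemma sum_le_R (I : finType) (A : {set I}) (F : I -> nat) (c : R) :
  (forall v, v \in A -> (INR (F v) <= c)%R) ->
  (INR (\sum_(v in A) F v) <= INR #|A| * c)%R.
Proof.
move=> H; rewrite -sum1_card.
apply: (big_ind2 (fun a b : nat => (INR a <= INR b * c)%R)).
- rewrite /=; lra.
- move=> x1 x2 y1 y2 h1 h2; rewrite !INR_addn; lra.
- move=> i iA; have := H i iA; rewrite /=; lra.
Qed.

Lemma sum_ge_R (I : finType) (A : {set I}) (F : I -> nat) (c : R) :
  (forall v, v \in A -> (c <= INR (F v))%R) ->
  (INR #|A| * c <= INR (\sum_(v in A) F v))%R.
Proof.
move=> H; rewrite -sum1_card.
apply: (big_ind2 (fun b a : nat => (INR b * c <= INR a)%R)).
- rewrite /=; lra.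
- move=> x1 x2 y1 y2 h1 h2; rewrite !INR_addn; lra.
- move=> i iA; have := H i iA; rewrite /=; lra.
Qed.


Definition EG (T : finType) (e : rel T) : {set {set T}} :=
  [set A : {set T} | [exists x, exists y, [&& x != y, e x y & A == [set x; y]]]].

Lemma nedgesE (T : finType) (e : rel T) : nedges e = #|EG e|.
Proof. by []. Qed.

Lemma EG_pair (T : finType) (e : rel T) A :
  A \in EG e -> exists x y, [/\ x != y, e x y & A = [set x; y]].
Proof.
rewrite inE => /existsP [x /existsP [y /and3P [xy exy /eqP ->]]]; by exists x, y.
Qed.

Lemma card_EG (T : finType) (e : rel T) A : A \in EG e -> #|A| = 2.
Proof. by case/EG_pair => x [y [xy _ ->]]; rewrite cards2 xy. Qed.

Definition eX (T : finType) (e : rel T) (X : {set T}) : nat :=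
  #|[set A in EG e | A \subset X]|.

Lemma bad_bound (T : finType) (e : rel T) (X H : {set T}) :
  H \subset X -> 4 * #|H| <= #|X| ->
  exists Y : {set T}, #|Y| = 4 * #|H| /\ Y \subset X /\
    3 * #|H| * #|[set A in EG e | (A \subset X) && (A :&: H != set0)]|
      <= #|X| * eX e Y.
Proof.
move=> HX h4.
set L := X :\: H.
set B := [set A in EG e | (A \subset X) && (A :&: H != set0)].
have cL : #|L| = #|X| - #|H| by rewrite /L cardsD (setIidPr HX).
have [Z [ZL [cZ hZ]]] := @averaging _ L (dgr B) (3 * #|H|) ltac:(lia).
set Y := H :|: Z.
have HZ : H :&: Z = set0.
  apply/setP => v; rewrite !inE; apply/negP => /andP [vH vZ].
  by move/subsetP: ZL => /(_ v vZ); rewrite /L !inE vH.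
have cY : #|Y| = 4 * #|H| by rewrite /Y cardsU HZ cards0 cZ; lia.
have YX : Y \subset X.
  rewrite /Y subUset HX /=; apply: subset_trans ZL _; exact: subsetDl.
exists Y; split => //; split => //.
have fa : forall A, A \in B -> #|A :&: L| <= 1.
  move=> A; rewrite inE => /andP [AE /andP [AX /set0Pn [h hAH]]].
  move: hAH; rewrite inE => /andP [hA hH].
  have : #|A :\ h| = 1 by have := cardsD1 h A; rewrite hA (card_EG AE); lia.
  move=> <-; apply: subset_leq_card; apply/subsetP => v; rewrite !inE.
  case/andP => vA /andP [vH _]; rewrite vA andbT; apply/eqP => vh.
  by move: vH; rewrite vh hH.
have fb : forall A, A \in B -> 1 <= (A \subset Y) + #|A :&: (L :\: Z)|.
  move=> A AB; case: (boolP (A \subset Y)) => [//|/subsetPn [v vA vY]].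
  move: AB; rewrite inE => /andP [_ /andP [AX _]].
  rewrite add0n card_gt0; apply/set0Pn; exists v.
  move: vY; rewrite /Y /L !inE vA => /norP [vH vZ].
  by rewrite vH vZ (subsetP AX v vA).
have fc : forall A, A \in B -> #|A :&: Z| <= (A \subset Y).
  move=> A AB; case: (boolP (A \subset Y)) => [_|nAY].
    apply: leq_trans (fa A AB); apply: subset_leq_card; apply: setIS; exact: ZL.
  rewrite leqn0 cards_eq0; apply/eqP/setP => z; rewrite !inE.
  apply/negP => /andP [zA zZ]; move/negP: nAY; apply; apply/subsetP => v vA.
  move: (AB); rewrite inE => /andP [_ /andP [AX _]].
  rewrite /Y inE; case: (boolP (v \in H)) => //= vH.
  have zL : z \in L by exact: (subsetP ZL).
  have vL : v \in L by rewrite /L inE vH (subsetP AX v vA).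
  have := fa A AB => /card_le1_eqP /(_ v z); rewrite !in_setI vA vL zA zL => /(_ isT isT) <-.
  exact: zZ.
set SP := \sum_(A in B) ((A \subset Y) : nat).
have s1 : #|B| <= SP + \sum_(v in L :\: Z) dgr B v.
  rewrite sum_dgr -big_split /= -sum1_card; apply: leq_sum => A AB; exact: fb.
have s2 : \sum_(v in Z) dgr B v <= SP.
  rewrite sum_dgr; apply: leq_sum => A AB; exact: fc.
have s3 : \sum_(v in L) dgr B v = \sum_(v in Z) dgr B v + \sum_(v in L :\: Z) dgr B v.
  by rewrite (big_setID Z) /= (setIidPr ZL).
have s4 : SP <= eX e Y.
  rewrite /SP sum_cond_card /eX; apply: subset_leq_card; apply/subsetP => A.
  by rewrite !inE => /andP [/andP [-> _] ->].
rewrite s3 in hZ.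
have hLX : #|L| <= #|X| by lia.
set a := SP in s1 s2 s4 *; set z := \sum_(v in Z) dgr B v in s2 hZ *.
set l := \sum_(v in L :\: Z) dgr B v in s1 hZ *.
set t := 3 * #|H| in hZ *.
have htL : t <= #|L| by rewrite /t; lia.
have : t * #|B| <= #|L| * a.
  have e1 : t * #|B| <= t * a + t * l by rewrite -mulnDr leq_mul2l s1 orbT.
  have e2 : t * z + t * l <= #|L| * z by rewrite -mulnDr.
  have e3 : (#|L| - t) * z <= (#|L| - t) * a by rewrite leq_mul2l s2 orbT.
  nia.
move=> h; apply: leq_trans h _; apply: leq_mul => //.
Qed.


Definition Rltb (x y : R) : bool := if Rlt_dec x y then true else false.
Lemma RltbP x y : Rltb x y = true <-> (x < y)%R.
Proof. rewrite /Rltb; case: (Rlt_dec x y) => //. Qed.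

Lemma dgr_setU1 (T : finType) (E : {set {set T}}) A v :
  A \notin E -> dgr (A |: E) v = (v \in A) + dgr E v.
Proof.
move=> AE; rewrite /dgr; case: (boolP (v \in A)) => vA.
  have -> : [set B in A |: E | v \in B] = A |: [set B in E | v \in B].
    apply/setP => B; rewrite !inE; case: (boolP (B == A)) => [/eqP ->|] //=.
  by rewrite cardsU1 inE (negbTE AE).
rewrite (_ : (false : nat) = 0) // add0n.
apply: eq_card => B; rewrite !inE; case: (boolP (B == A)) => [/eqP ->|] //=.
by rewrite (negbTE vA) andbF.
Qed.

Lemma dgr_split (T : finType) (F E : {set {set T}}) v :
  E \subset F -> dgr F v = dgr E v + dgr (F :\: E) v.
Proof.
move=> EF; rewrite /dgr -(cardsID E [set A in F | v \in A]); congr (_ + _).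
  apply: eq_card => A; rewrite !inE; case: (boolP (A \in E)) => AE /=.
    by rewrite (subsetP EF A AE) andbT.
  by rewrite andbF.
apply: eq_card => A; rewrite !inE; by case: (A \in E); case: (A \in F); case: (v \in A).
Qed.

Lemma capping (T : finType) (f0 : {set {set T}}) (r D : R) :
  (forall A, A \in f0 -> #|A| = 2) -> (forall v, (INR (dgr f0 v) <= D)%R) -> (1 < r)%R ->
  exists E' : {set {set T}}, E' \subset f0 /\ (forall v, (INR (dgr E' v) <= r)%R) /\
   ((INR #|f0| <= INR #|E'|)%R \/ (INR #|f0| * (r - 1) <= INR #|E'| * (2 * D))%R).
Proof.
move=> c2 hD r1.
pose P (E : {set {set T}}) := E \subset f0 /\ forall v, (INR (dgr E v) <= r)%R.
have P0 : P set0.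
  split; first exact: sub0set.
  move=> v; rewrite /dgr (_ : [set A in (set0 : {set {set T}}) | v \in A] = set0) ?cards0 /=; first lra.
  by apply/setP => A; rewrite !inE.
have [E' [[E'f0 E'r] Emax]] := @exists_max _ P (fun E => INR #|E|) set0 P0.
exists E'; split => //; split => //.
pose Sat := [set v | Rltb r (INR (dgr E' v) + 1)].
have key : forall A, A \in f0 :\: E' -> 1 <= #|A :&: Sat|.
  move=> A; rewrite inE => /andP [AnE Af0].
  have nP : ~ P (A |: E').
    move=> HP; have := Emax _ HP; rewrite cardsU1 AnE.
    change (true + #|E'|) with (#|E'|.+1); rewrite S_INR; lra.
  have [v hv] : exists v, ~ (INR (dgr (A |: E') v) <= r)%R.
    apply: NNPP => hn; apply: nP; split.
      by rewrite subUset sub1set Af0 E'f0.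
    move=> v; apply: NNPP => hv; apply: hn; by exists v.
  move: hv; rewrite dgr_setU1 //; case: (boolP (v \in A)) => vA.
    move=> hv; rewrite card_gt0; apply/set0Pn; exists v; rewrite !inE vA /=.
    apply/RltbP; rewrite INR_addn in hv; change (INR true) with 1%R in hv; lra.
  rewrite add0n => hv; exfalso; apply: hv; exact: E'r.
set F := f0 :\: E'.
have s1 : #|F| <= \sum_(v in Sat) dgr F v.
  rewrite sum_dgr -sum1_card; apply: leq_sum => A AF; exact: key.
have s2 : (INR (\sum_(v in Sat) dgr F v) <= INR #|Sat| * (D - (r - 1)))%R.
  apply: sum_le_R => v; rewrite inE => /RltbP hv.
  have := hD v; rewrite (dgr_split v E'f0) INR_addn -/F; lra.
have s3 : \sum_(v in Sat) dgr E' v <= 2 * #|E'|.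
  rewrite sum_dgr mulnC -sum_nat_const; apply: leq_sum => A AE.
  rewrite -(c2 A (subsetP E'f0 A AE)); apply: subset_leq_card; exact: subsetIl.
have s4 : (INR #|Sat| * (r - 1) <= INR (\sum_(v in Sat) dgr E' v))%R.
  apply: sum_ge_R => v; rewrite inE => /RltbP hv; lra.
have s5 : #|f0| = #|E'| + #|F|.
  by rewrite -(cardsID E' f0) (setIidPr E'f0).
have s1R : (INR #|F| <= INR (\sum_(v in Sat) dgr F v))%R by apply: le_INR; apply/leP.
have s3R : (INR (\sum_(v in Sat) dgr E' v) <= 2 * INR #|E'|)%R.
  have := le_INR _ _ (elimT leP s3); rewrite INR_muln /=; lra.
rewrite s5 INR_addn.
have satp : (0 <= INR #|Sat|)%R by apply: pos_INR.
have ep : (0 <= INR #|E'|)%R by apply: pos_INR.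
case: (Rle_lt_dec (D - (r - 1)) 0) => hc.
  left; have : (INR #|Sat| * (D - (r - 1)) <= 0)%R by nra.
  lra.
right.
have h1 : (INR #|F| * (r - 1) <= INR #|Sat| * (r - 1) * (D - (r - 1)))%R.
  have : (INR #|F| <= INR #|Sat| * (D - (r - 1)))%R by lra.
  move=> h; have := Rmult_le_compat_r (r - 1) _ _ ltac:(lra) h; lra.
have h2 : (INR #|Sat| * (r - 1) * (D - (r - 1)) <= 2 * INR #|E'| * (D - (r - 1)))%R.
  apply: Rmult_le_compat_r; lra.
nra.
Qed.


Lemma set2_eq (T : finType) (x y x' y' : T) : x != y ->
  [set x; y] = [set x'; y'] -> (x = x' /\ y = y') \/ (x = y' /\ y = x').
Proof.
move=> xy E.
have hx : x \in [set x'; y'] by rewrite -E !inE eqxx.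
have hy : y \in [set x'; y'] by rewrite -E !inE eqxx orbT.
have hx' : x' \in [set x; y] by rewrite E !inE eqxx.
move: hx hy hx'; rewrite !inE => /orP [/eqP ex|/eqP ex] /orP [/eqP ey|/eqP ey] hx'.
- by move: xy; rewrite ex ey eqxx.
- by left.
- by right.
- by move: xy; rewrite ex ey eqxx.
Qed.

Lemma from_edges (T : finType) (e : rel T) (S : {set T}) (E' : {set {set T}}) :
  simple_graph e -> E' \subset EG e -> (forall A, A \in E' -> A \subset S) ->
  exists f : rel T, subgraph e S f /\ #|E'| <= nedges f /\
    (forall v, deg f v <= dgr E' v).
Proof.
move=> [esym eirr] E'G AS.
exists [rel x y | (x != y) && ([set x; y] \in E')].
split; [split|split].
- move=> x y /=; by rewrite eq_sym setUC.
- move=> x y /= /andP [xy xyE].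
  have [x' [y' [xy' exy' exy]]] := EG_pair (subsetP E'G _ xyE).
  have xyS := AS _ xyE.
  rewrite (subsetP xyS x) ?(subsetP xyS y) ?inE ?eqxx ?orbT // !andbT.
  case: (set2_eq xy exy) => [[-> ->] //|[-> ->]]; by rewrite esym.
- rewrite nedgesE; apply: subset_leq_card; apply/subsetP => A AE.
  have [x [y [xy exy eA]]] := EG_pair (subsetP E'G _ AE).
  rewrite inE; apply/existsP; exists x; apply/existsP; exists y.
  by rewrite /= xy -eA AE eqxx.
- move=> v; rewrite /deg /dgr.
  rewrite -(@card_in_imset _ _ (fun y => [set v; y])).
    apply: subset_leq_card; apply/subsetP => A /imsetP [y]; rewrite !inE => /andP [vy vyE] ->.
    by rewrite vyE !inE eqxx.
  move=> y1 y2; rewrite !inE => /andP [vy1 _] /andP [vy2 _] E.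
  have : y1 \in [set v; y2] by rewrite -E !inE eqxx orbT.
  rewrite !inE => /orP [/eqP h|/eqP //]; by move: vy1; rewrite h eqxx.
Qed.

Lemma maxdeg_le (T : finType) (S : {set T}) (f : rel T) (c : R) :
  (forall v, (INR (deg f v) <= c)%R) -> (0 <= c)%R -> (INR (maxdeg S f) <= c)%R.
Proof.
move=> H c0; rewrite /maxdeg.
case: (posnP #|S|) => [/eqP|Sp].
  rewrite cards_eq0 => /eqP ->; rewrite big_set0 /=; lra.
have [x _ ->] := eq_bigmax_cond (deg f) Sp; exact: H.
Qed.

Module RealAux1.
Local Open Scope R_scope.

Lemma Rpow_pos x y : 0 < Rpower x y.
Proof. exact: exp_pos. Qed.

Lemma ln_le_mono a b : 0 < a -> a <= b -> ln a <= ln b.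
Proof.
move=> a0 ab; case: (Rle_lt_or_eq_dec a b ab) => [lt|->]; last lra.
have := ln_increasing a b a0 lt; lra.
Qed.

Lemma ln_le_inv a b : 0 < a -> 0 < b -> ln a <= ln b -> a <= b.
Proof.
move=> a0 b0 h; case: (Rle_lt_or_eq_dec _ _ h) => [lt|eq].
  have := ln_lt_inv a b a0 b0 lt; lra.
have := exp_ln a a0; have := exp_ln b b0; rewrite eq; lra.
Qed.

Lemma ln_Rpow x y : 0 < x -> ln (Rpower x y) = y * ln x.
Proof. move=> _; rewrite /Rpower ln_exp //. Qed.

Lemma Rpow_ge1 x y : 1 <= x -> 0 <= y -> 1 <= Rpower x y.
Proof.
move=> x1 y0; have := Rle_Rpower x 0 y x1 y0; rewrite Rpower_O; lra.
Qed.

Lemma Rpow_le_base a b y : 0 < a -> a <= b -> 0 <= y -> Rpower a y <= Rpower b y.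
Proof.
move=> a0 ab y0; apply: ln_le_inv; try exact: Rpow_pos.
rewrite !ln_Rpow; try lra; apply: Rmult_le_compat_l => //; exact: ln_le_mono.
Qed.

Lemma Rpow_1plus x y : 0 < x -> Rpower x (1 + y) = x * Rpower x y.
Proof. move=> x0; by rewrite Rpower_plus Rpower_1. Qed.

Lemma div_cross a b c d : 0 < b -> 0 < d -> a / b <= c / d -> a * d <= c * b.
Proof.
move=> b0 d0 h.
have := Rmult_le_compat_r (b * d) _ _ ltac:(nra) h.
have -> : a / b * (b * d) = a * d by field; lra.
have -> : c / d * (b * d) = c * b by field; lra.
done.
Qed.

End RealAux1.
Import RealAux1.
Module RealAux2.
Local Open Scope R_scope.

Lemma alpha_facts (a : R) : 0 < a < 1 ->
  let g := (1 + 3 * a ^ 2) / (1 + a ^ 2) in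
  1 < g /\ 0 < 1 + a - g /\ 0 < 2 - g /\
  a * ((1 - a) / (1 + a)) * (2 - g) = 1 + a - g /\
  (/ (a ^ 2) + 1) * (g - 1) = 2.
Proof.
move=> ha g.
have p : 0 < 1 + a ^ 2 by nra.
have a2 : 0 < a ^ 2 by nra.
have e1 : g - 1 = 2 * a ^ 2 / (1 + a ^ 2) by rewrite /g; field; lra.
have e2 : 1 + a - g = a * (1 - a) ^ 2 / (1 + a ^ 2) by rewrite /g; field; lra.
have e3 : 2 - g = (1 - a ^ 2) / (1 + a ^ 2) by rewrite /g; field; lra.
split; [|split; [|split; [|split]]].
- have : 0 < 2 * a ^ 2 / (1 + a ^ 2) by apply: Rdiv_lt_0_compat; lra.
  lra.
- rewrite e2; apply: Rdiv_lt_0_compat => //; apply: Rmult_lt_0_compat; nra.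
- rewrite e3; apply: Rdiv_lt_0_compat => //; nra.
- rewrite e2 e3; field; lra.
- rewrite e1; field; lra.
Qed.

End RealAux2.
Import RealAux2.

Lemma eX_setT (T : finType) (e : rel T) : eX e setT = nedges e.
Proof. rewrite nedgesE /eX; apply: eq_card => A; by rewrite !inE subsetT andbT. Qed.

Lemma eX_le_sq (T : finType) (e : rel T) (X : {set T}) : eX e X <= #|X| * #|X|.
Proof.
rewrite /eX -cardsX.
apply: leq_trans (leq_imset_card (fun p : T * T => [set p.1; p.2]) (setX X X)).
apply: subset_leq_card; apply/subsetP => A; rewrite inE => /andP [AE AX].
have [x [y [_ _ eA]]] := EG_pair AE.
apply/imsetP; exists (x, y) => //.
rewrite inE /= (subsetP AX x) ?(subsetP AX y) // eA !inE eqxx ?orbT //.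
Qed.

Lemma dgr_mono (T : finType) (F G : {set {set T}}) v : F \subset G -> dgr F v <= dgr G v.
Proof.
move=> FG; apply: subset_leq_card; apply/subsetP => A; rewrite !inE => /andP [AF ->].
by rewrite (subsetP FG A AF).
Qed.

Lemma sum_dgr_le2 (T : finType) (F : {set {set T}}) (W : {set T}) :
  (forall A, A \in F -> #|A| = 2) -> \sum_(v in W) dgr F v <= 2 * #|F|.
Proof.
move=> c2; rewrite sum_dgr mulnC -sum_nat_const; apply: leq_sum => A AF.
rewrite -(c2 A AF); apply: subset_leq_card; exact: subsetIl.
Qed.


Theorem lemma2p9 (alpha : R) :
  (0 < alpha < 1)%R ->
  exists N : nat, forall (n : nat), (N <= n)%N ->
  forall (T : finType) (e : rel T),
    #|T| = n -> simple_graph e ->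
    (Rpower (INR n) (1 + alpha) <= INR (nedges e))%R ->
    exists (S : {set T}) (f : rel T),
      subgraph e S f /\
      (Rpower (INR n) (alpha * ((1 - alpha) / (1 + alpha))) <= INR #|S|)%R /\
      (/ 3 * Rpower (INR #|S|) (1 + alpha) <= INR (nedges f))%R /\
      (INR (maxdeg S f) <=
         10 * Rpower 2 (/ (alpha ^ 2) + 1) * Rpower (INR #|S|) alpha)%R.
Proof.
move=> ha.
have [g1 [p1 [p2 [I1 I2]]]] := alpha_facts ha.
set gam := ((1 + 3 * alpha ^ 2) / (1 + alpha ^ 2))%R in g1 p1 p2 I1 I2.
exists 1%N => n n1 T e cT sg He.
set q := Rpower 2 (/ (alpha ^ 2) + 1).
have q1 : (1 <= q)%R.
  apply: Rpow_ge1; first lra.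
  have : (0 < / (alpha ^ 2))%R by apply: Rinv_0_lt_compat; nra.
  lra.
have [x0 _] : exists x0 : T, x0 \in T by apply/card_gt0P; rewrite cT.
have sTn : [set: T] != set0 by apply/set0Pn; exists x0; rewrite inE.
have [X [XP Xmax]] := @exists_max _ (fun X : {set T} => X != set0)
   (fun X => INR (eX e X) / Rpower (INR #|X|) gam)%R setT sTn.
set N := #|X| in Xmax *.
set e1 := eX e X in Xmax *.
have N1 : (0 < N)%N by rewrite card_gt0.
have NR : (0 < INR N)%R by apply: lt_0_INR; apply/ltP.
have nR : (0 < INR n)%R by apply: lt_0_INR; apply/ltP.
have Nn : (N <= n)%N by rewrite -cT; apply: max_card.
have NnR : (INR N <= INR n)%R by apply: le_INR; apply/leP.
have maxim : forall Y : {set T}, Y != set0 ->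
    (INR (eX e Y) * Rpower (INR N) gam <= INR e1 * Rpower (INR #|Y|) gam)%R.
  move=> Y hY; apply: div_cross; try exact: Rpow_pos; exact: Xmax.
have hT := maxim _ sTn; rewrite eX_setT cardsT cT in hT.
have L2 : (Rpower (INR n) (1 + alpha - gam) * Rpower (INR N) gam <= INR e1)%R.
  apply: (Rmult_le_reg_r (Rpower (INR n) gam)); first exact: Rpow_pos.
  apply: Rle_trans hT.
  have -> : (Rpower (INR n) (1 + alpha - gam) * Rpower (INR N) gam * Rpower (INR n) gam
     = Rpower (INR n) (1 + alpha) * Rpower (INR N) gam)%R.
    have E : (Rpower (INR n) (1 + alpha) = Rpower (INR n) (1 + alpha - gam) * Rpower (INR n) gam)%R.
      by rewrite -Rpower_plus; congr Rpower; ring.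
    rewrite E; ring.
  apply: Rmult_le_compat_r; first exact: (Rlt_le _ _ (Rpow_pos _ _)).
  exact: He.
have e1pos : (0 < INR e1)%R.
  apply: Rlt_le_trans L2; apply: Rmult_lt_0_compat; exact: Rpow_pos.
have L3 : (INR e1 <= INR N * INR N)%R.
  rewrite -mult_INR; apply: le_INR; apply/leP; exact: eX_le_sq.
have Nbeta : (Rpower (INR n) (alpha * ((1 - alpha) / (1 + alpha))) <= INR N)%R.
  apply: ln_le_inv => //; first exact: Rpow_pos.
  rewrite ln_Rpow //.
  have h1 := ln_le_mono (Rmult_lt_0_compat _ _ (Rpow_pos (INR n) (1 + alpha - gam)) (Rpow_pos (INR N) gam)) (Rle_trans _ _ _ L2 L3).
  rewrite !ln_mult ?ln_Rpow // in h1; try exact: Rpow_pos.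
  apply: (Rmult_le_reg_l (2 - gam)) => //.
  have -> : ((2 - gam) * (alpha * ((1 - alpha) / (1 + alpha)) * ln (INR n))
     = (alpha * ((1 - alpha) / (1 + alpha)) * (2 - gam)) * ln (INR n))%R by ring.
  rewrite I1; lra.
have eN : (Rpower (INR N) (1 + alpha) <= INR e1)%R.
  apply: Rle_trans L2.
  have E : (Rpower (INR N) (1 + alpha) = Rpower (INR N) (1 + alpha - gam) * Rpower (INR N) gam)%R.
    by rewrite -Rpower_plus; congr Rpower; ring.
  rewrite E; apply: Rmult_le_compat_r; first exact: (Rlt_le _ _ (Rpow_pos _ _)).
  apply: Rpow_le_base => //; lra.
set EX := [set A in EG e | A \subset X].
have e1E : e1 = #|EX| by [].
set D := (8 * q * INR e1 / INR N)%R.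
have D0 : (0 <= D)%R.
  rewrite /D; apply: Rmult_le_pos; last by apply: Rlt_le; apply: Rinv_0_lt_compat.
  nra.
set H := [set v in X | Rltb D (INR (dgr EX v))].
have HX : H \subset X by apply/subsetP => v; rewrite inE => /andP [].
have hH : (INR #|H| * D <= 2 * INR e1)%R.
  have := @sum_ge_R _ H (dgr EX) D.
  have s1 : \sum_(v in H) dgr EX v <= 2 * #|EX|.
    apply: sum_dgr_le2 => A; rewrite inE => /andP [AE _]; exact: card_EG AE.
  have := le_INR _ _ (elimT leP s1); rewrite mult_INR -e1E /=.
  move=> h2 h1; apply: Rle_trans h2; apply: h1 => v; rewrite inE => /andP [_ /RltbP]; lra.
have hq : (4 * INR #|H| * q <= INR N)%R.
  have : (INR #|H| * (8 * q * INR e1) <= 2 * INR e1 * INR N)%R.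
    have := Rmult_le_compat_r (INR N) _ _ (Rlt_le _ _ NR) hH.
    have -> : (INR #|H| * D * INR N = INR #|H| * (8 * q * INR e1))%R.
      rewrite /D; field; lra.
    done.
  move=> h; nra.
have h4 : 4 * #|H| <= N.
  apply/leP; apply: INR_le; rewrite mult_INR /=.
  have : (0 <= INR #|H|)%R by apply: pos_INR.
  move=> h0; nra.
set B := [set A in EG e | (A \subset X) && (A :&: H != set0)].
have hB : (3 * INR #|B| <= INR e1)%R.
  case: (posnP #|H|) => [h0|hpos].
    have -> : #|B| = 0.
      apply/eqP; rewrite cards_eq0; apply/eqP/setP => A; rewrite !inE.
      move/eqP: h0; rewrite cards_eq0 => /eqP ->; by rewrite setI0 eqxx !andbF.
    rewrite /=; lra.
  have [Y [cY [YX hY]]] := bad_bound e HX h4.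
  have Yn : Y != set0 by rewrite -card_gt0 cY; lia.
  have mY := maxim Y Yn; rewrite cY in mY.
  have hYR : (3 * INR #|H| * INR #|B| <= INR N * INR (eX e Y))%R.
    have := le_INR _ _ (elimT leP hY); rewrite !mult_INR /=.
    rewrite -/B -/N; lra.
  have hRp : (0 < INR #|H|)%R by apply: lt_0_INR; apply/ltP.
  have key : (INR N * Rpower (INR (4 * #|H|)) gam <= INR #|H| * Rpower (INR N) gam)%R.
    have h4R : INR (4 * #|H|) = (4 * INR #|H|)%R by rewrite mult_INR /=; ring.
    rewrite h4R.
    have q0 : (0 < q)%R by lra.
    have lnq : ln q = ((/ (alpha ^ 2) + 1) * ln 2)%R.
      rewrite /q ln_Rpow //; lra.
    have ln4 : ln 4 = (2 * ln 2)%R.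
      rewrite (_ : 4 = 2 * 2)%R; last ring. rewrite ln_mult; lra.
    have F : ((gam - 1) * ((/ (alpha ^ 2) + 1) * ln 2) = 2 * ln 2)%R by rewrite -I2; ring.
    have hl := ln_le_mono (Rmult_lt_0_compat _ _ (Rmult_lt_0_compat 4 _ ltac:(lra) hRp) q0) hq.
    rewrite !ln_mult // in hl; try lra; try nra.
    have e2 : (R1 + R1 = 2)%R by ring.
    rewrite e2 in hl.
    apply: ln_le_inv.
    - apply: Rmult_lt_0_compat => //; exact: Rpow_pos.
    - apply: Rmult_lt_0_compat => //; exact: Rpow_pos.
    rewrite !ln_mult ?ln_Rpow //; try exact: Rpow_pos; try lra; try nra.
    have u0 : (0 <= (gam - 1) * (ln (INR N) - ln 4 - ln (INR #|H|) - ln q))%R.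
      apply: Rmult_le_pos; lra.
    rewrite lnq in u0 hl; rewrite ln_mult; [|lra|done]; rewrite ln4 in u0 *; lra.
  set P := Rpower (INR N) gam in mY key.
  set Q := Rpower (INR (4 * #|H|)) gam in mY key.
  have P0 : (0 < P)%R by exact: Rpow_pos.
  have a := Rmult_le_compat_r P _ _ (Rlt_le _ _ P0) hYR.
  have b := Rmult_le_compat_l (INR N) _ _ (Rlt_le _ _ NR) mY.
  have c := Rmult_le_compat_l (INR e1) _ _ (Rlt_le _ _ e1pos) key.
  apply: (Rmult_le_reg_r (INR #|H| * P)); first exact: Rmult_lt_0_compat.
  have -> : (3 * INR #|B| * (INR #|H| * P) = 3 * INR #|H| * INR #|B| * P)%R by ring.
  apply: Rle_trans a _.
  have -> : (INR N * INR (eX e Y) * P = INR N * (INR (eX e Y) * P))%R by ring.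
  apply: Rle_trans b _.
  have -> : (INR N * (INR e1 * Q) = INR e1 * (INR N * Q))%R by ring.
  done.
set f0 := [set A in EG e | (A \subset X) && (A :&: H == set0)].
have cf0 : #|f0| + #|B| = e1.
  rewrite e1E -(cardsID [set A | A :&: H == set0] EX).
  congr (_ + _); apply: eq_card => A; rewrite !inE;
  by case: (A \subset X); case: (A :&: H == set0); rewrite ?andbT ?andbF.
have f0R : (2 * INR e1 <= 3 * INR #|f0|)%R.
  have := f_equal INR cf0; rewrite plus_INR; lra.
have f0EX : f0 \subset EX.
  apply/subsetP => A; rewrite !inE => /andP [-> /andP [-> _]] //.
have f0G : f0 \subset EG e.
  apply/subsetP => A; rewrite !inE => /andP [-> _] //.
have c2 : forall A, A \in f0 -> #|A| = 2.
  move=> A Af; exact: card_EG (subsetP f0G A Af).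
have hD : forall v, (INR (dgr f0 v) <= D)%R.
  move=> v; case: (boolP (v \in H)) => vH.
    suff -> : dgr f0 v = 0 by rewrite /=.
    apply/eqP; rewrite cards_eq0; apply/eqP/setP => A; rewrite !inE.
    apply/negP => /andP [/andP [_ /andP [_ /eqP AH]] vA].
    by move/setP: AH => /(_ v); rewrite in_setI vA vH in_set0.
  apply: Rle_trans (le_INR _ _ (elimT leP (dgr_mono v f0EX))) _.
  case: (boolP (v \in X)) => vX.
    move: vH; rewrite inE vX /= => vH.
    apply: Rnot_lt_le => lt; move/negP: vH; apply; exact/RltbP.
  suff -> : dgr EX v = 0 by rewrite /=.
  apply/eqP; rewrite cards_eq0; apply/eqP/setP => A; rewrite !inE.
  apply/negP => /andP [/andP [_ AX] vA]; move/negP: vX; apply; exact: (subsetP AX).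
set r := (10 * q * Rpower (INR N) alpha)%R.
have Na1 : (1 <= Rpower (INR N) alpha)%R.
  apply: Rpow_ge1; last lra.
  have : (1 <= N)%N by []. move/leP/le_INR; rewrite /=; lra.
have r1 : (1 < r)%R by rewrite /r; nra.
have [E' [E'f0 [E'r E'c]]] := capping c2 hD r1.
have E'X : forall A, A \in E' -> A \subset X.
  move=> A AE; have := subsetP f0EX A (subsetP E'f0 A AE); by rewrite inE => /andP [_ ->].
have [f [fsub [fE fdeg]]] := from_edges sg (subset_trans E'f0 f0G) E'X.
exists X, f; split => //; split; first exact: Nbeta.
split; last first.
  apply: maxdeg_le; last by have := r1; rewrite /r /N; lra.
  move=> v; apply: Rle_trans (E'r v); apply: le_INR; apply/leP; exact: fdeg.
have fER : (INR #|E'| <= INR (nedges f))%R by apply: le_INR; apply/leP.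
rewrite -/N Rpow_1plus //.
set Na := Rpower (INR N) alpha in Na1 r1 E'c *.
suff : (INR N * Na <= 3 * INR #|E'|)%R by lra.
have NaN : (INR N * Na <= INR e1)%R by rewrite -Rpow_1plus.
case: E'c => [h|h]; first by lra.
have DN : (D * INR N = 8 * q * INR e1)%R by rewrite /D; field; lra.
have rq : (8 * q * Na <= r - 1)%R by rewrite /r -/Na; nra.
have f0p : (0 <= INR #|f0|)%R by apply: pos_INR.
have k1 : (INR #|f0| * (8 * q * Na) <= INR #|E'| * (2 * D))%R.
  apply: Rle_trans h; apply: Rmult_le_compat_l => //.
have k2 := Rmult_le_compat_r (8 * q * Na) _ _ ltac:(nra) f0R.
have k12 : (2 * INR e1 * (8 * q * Na) <= 3 * INR #|E'| * (2 * D))%R.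
  have := Rmult_le_compat_l 3 _ _ ltac:(lra) k1; lra.
have k4 := Rmult_le_compat_r (INR N) _ _ (Rlt_le _ _ NR) k12.
have k3 : (2 * INR e1 * (8 * q * Na) * INR N <= 3 * INR #|E'| * (2 * (8 * q * INR e1)))%R.
  rewrite -DN; apply: Rle_trans k4 _; right; ring.
apply: (Rmult_le_reg_r (16 * q * INR e1)); first nra.
have -> : (INR N * Na * (16 * q * INR e1) = 2 * INR e1 * (8 * q * Na) * INR N)%R by ring.
have -> : (3 * INR #|E'| * (16 * q * INR e1) = 3 * INR #|E'| * (2 * (8 * q * INR e1)))%R by ring.
done.
Qed.
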